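(* Consider the Gumbel-max watermark model of the context. If, almost surely, $\mathbf{P}_t\in\mathcal{P}_{\Delta_n}$, and $n$ is large enough that $\Delta_n<0.5$, then almost surely $\mathbb{E}_{Y\sim U(0,1)}\big(\bar f_{1,t}(Y)-1\big)^2\ge c\,\Delta_n$, where $c>0$ is a universal constant.
   Context: $\mathcal{W}$ is a finite vocabulary; $\mathcal{P}_\Delta=\{\mathbf{P}:\max_wP_w\le1-\Delta\}$. For a probability vector $\mathbf{P}$, $f_{1,\mathbf{P}}(r)=\sum_{w:P_w>0}r^{1/P_w-1}$ (density of the CDF $\sum_wP_wr^{1/P_w}$ on $[0,1]$). Watermark model: at step $t$ a random next-token distribution $\mathbf{P}_t$ is produced and a pivotal statistic $Y_t$ is observed (Gumbel-max scheme: $\xi_t=(U_{t,w})_w$ i.i.d. $U(0,1)$, token $w_t$, $Y_t=U_{t,w_t}$). With $\mathcal{G}_{t-1}=\sigma(Y_1,\dots,Y_{t-1})$, define $\bar f_{1,t}(y)=\mathbb{E}_1[f_{1,\mathbf{P}_t}(y)\mid\mathcal{G}_{t-1}]$, where the conditional expectation is over $\mathbf{P}_t$ under the watermark model; in $\mathbb{E}_{Y\sim U(0,1)}$, $\bar f_{1,t}$ is held fixed and only $Y$ is integrated. *)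

(* Defs.v *)
From HB Require Import structures.
From mathcomp Require Import all_boot all_order all_algebra.
From mathcomp Require Import all_classical all_reals all_analysis.
Set Implicit Arguments. Unset Strict Implicit. Unset Printing Implicit Defensive.
Import Order.TTheory GRing.Theory Num.Theory.
Local Open Scope ring_scope.
Local Open Scope classical_set_scope.

Section Defs.
Variable R : realType.
Variable W : finType.

Definition is_probvec (P : W -> R) : Prop :=
  (forall w, 0 <= P w) /\ \sum_(w : W) P w = 1.

Definition in_PDelta (Delta : R) (P : W -> R) : Prop :=
  is_probvec P /\ (forall w, P w <= 1 - Delta).

Definition f1 (P : W -> R) (r : R) : R :=
  \sum_(w : W | 0 < P w) r `^ ((P w)^-1 - 1).

(* \bar f_{1,t}(y) = E[f_{1,P_t}(y) | G_{t-1}], written as the integral of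
   f_{1,P} against the (conditional) law [mu] of P_t, realized through a
   measurable map P : T -> (W -> R). *)
Definition fbar d (T : measurableType d) (mu : probability T R)
  (P : T -> W -> R) (y : R) : R :=
  fine (\int[mu]_(t in setT) (f1 (P t) y)%:E)%E.

End Defs.

(* Main.v *)
From HB Require Import structures.
From mathcomp Require Import all_boot all_order all_algebra.
From mathcomp Require Import all_classical all_reals all_analysis.
From mathcomp Require Import ring lra.
From mathcomp Require Import measurable_realfun.
Require Import Defs.
Import Order.TTheory GRing.Theory Num.Theory.
Import numFieldNormedType.Exports.
Local Open Scope ring_scope.
Local Open Scope classical_set_scope.

Section Aux.
Context {R : realType}.
Notation mu := (@lebesgue_measure R).



Lemma powR_cont (e x : R) : 0 < x -> {for x, continuous (fun y : R => y `^ e)}.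
Proof.
move=> x0; apply/differentiable_continuous; rewrite -derivable1_diffP.
by apply: derivable_powR; rewrite in_itv/= x0.
Qed.

Lemma int_powR (e u : R) : 0 < e -> 0 < u < 1 ->
  (\int[mu]_(y in `[u, 1%R]) (y `^ (e - 1))%:E = ((1 - u `^ e) / e)%:E)%E.
Proof.
move=> e0 /andP[u0 u1].
have Fd (y : R) : 0 < y -> is_derive y 1 (fun z => e^-1 * z `^ e) (e^-1 * (e * y `^ (e - 1))).
  by move=> y0; apply: is_deriveZ; exact: is_derive1_powR.
rewrite (@continuous_FTC2 _ _ (fun z => e^-1 * z `^ e))//.
- rewrite powR1 -EFinB; congr (_%:E).
  by rewrite -mulrBr mulrC.
- apply: derivable_within_continuous => y; rewrite in_itv/= => /andP[uy _].
  by apply: derivable_powR; rewrite in_itv/= andbT; exact: lt_le_trans uy.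
- split.
  + move=> y; rewrite in_itv/= => /andP[uy _].
    by have [] := Fd y (lt_trans u0 uy).
  + apply: cvg_at_right_filter.
    by have [/derivable1_diffP /differentiable_continuous] := Fd u u0.
  + apply: cvg_at_left_filter.
    by have [/derivable1_diffP /differentiable_continuous] := Fd 1 ltr01.
- move=> y; rewrite in_itv/= => /andP[uy _].
  rewrite derive1E.
  have := Fd y (lt_trans u0 uy) => H.
  by rewrite derive_val mulrA mulVf ?mul1r // gt_eqF.
Qed.


Lemma powR_bound (D e : R) : 0 < D < 1 -> 0 < e ->
  (1 - D) `^ e * (1 + e * D / 2) ^+ 2 <= 1.
Proof.
move=> /andP[D0 D1] e0.
have hD : 0 < 1 - D by rewrite subr_gt0.
have E1 : (1 - D) `^ e = expR (e * ln (1 - D)) by rewrite /powR gt_eqF.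
have L : ln (1 - D) <= - D by have := @le_ln1Dx R (- D); rewrite ltrNl opprK; apply.
have E2 : expR (e * ln (1 - D)) <= expR (- (e * D)).
  by rewrite ler_expR -mulrN ler_pM2l.
have E3 : (1 + e * D / 2) ^+ 2 <= expR (e * D).
  have -> : expR (e * D) = expR (e * D / 2) ^+ 2.
    by rewrite -expRM_natl; congr expR; field.
  apply: lerXn2r; rewrite ?nnegrE ?expR_ge0//.
    by apply: addr_ge0 => //; apply: divr_ge0 => //; apply: mulr_ge0; apply: ltW.
  exact: expR_ge1Dx.
rewrite E1; apply: (le_trans (ler_wpM2r _ E2)); first exact: sqr_ge0.
apply: (le_trans (ler_wpM2l _ E3)); first exact: expR_ge0.
by rewrite -expRD addNr expR0.
Qed.

Lemma spike (D p : R) : 0 < D < 1 -> 0 < p ->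
  5 / 9 * Num.min p D <= p * (1 - (1 - D) `^ p^-1).
Proof.
move=> hD p0; have := @powR_bound D p^-1 hD; rewrite invr_gt0 => /(_ p0).
set V := (1 - D) `^ p^-1 => HV.
have V0 : 0 <= V by apply: powR_ge0.
case/andP: hD => D0 D1.
set x := p^-1 * D in HV.
have x0 : 0 < x by rewrite /x mulr_gt0 ?invr_gt0.
have hx : D = p * x by rewrite /x mulrA mulfV ?mul1r // gt_eqF.
have q0 : 0 < (1 + x / 2) ^+ 2 by rewrite exprn_gt0 // ltr_wpDr // divr_ge0 // ltW.
case: (leP D p) => Dp.
- rewrite hx mulrA (mulrC _ p) -mulrA ler_pM2l //.
  have x1 : x <= 1 by rewrite -(ler_pM2l p0) mulr1 -hx.
  have H : 1 <= (1 - 5/9 * x) * (1 + x / 2) ^+ 2.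
    rewrite -subr_ge0.
    have -> : (1 - 5/9 * x) * (1 + x / 2) ^+ 2 - 1 = x * (16 - 11 * x - 5 * x^+2) / 36.
      by rewrite /GRing.exp /=; field.
    apply: divr_ge0 => //; apply: mulr_ge0; first exact: ltW.
    nra.
  have : V * (1 + x / 2) ^+ 2 <= (1 - 5/9 * x) * (1 + x / 2) ^+ 2 by exact: le_trans H.
  rewrite ler_pM2r // => H2; lra.
- rewrite mulrC ler_pM2l //.
  have x1 : 1 < x by rewrite -(ltr_pM2l p0) mulr1 -hx.
  have H : 9/4 <= (1 + x / 2) ^+ 2 by nra.
  have : V * 9/4 <= 1 by rewrite -mulrA; apply: le_trans HV; apply: ler_wpM2l.
  lra.
Qed.


Lemma min_sub (D a b : R) : 0 <= D -> 0 <= a -> 0 <= b ->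
  Num.min (a + b) D <= Num.min a D + Num.min b D.
Proof.
move=> D0 a0 b0.
case: (leP (a + b) D); case: (leP a D); case: (leP b D); lra.
Qed.

Lemma min_sum (W : finType) (Q : pred W) (f : W -> R) (D : R) : 0 <= D ->
  (forall w, 0 <= f w) ->
  Num.min (\sum_(w | Q w) f w) D <= \sum_(w | Q w) Num.min (f w) D.
Proof.
move=> D0 f0.
pose K (a b : R) := Num.min a D <= b /\ 0 <= a.
suff [] : K (\sum_(w | Q w) f w) (\sum_(w | Q w) Num.min (f w) D) by [].
apply: (big_rec2 K).
  by rewrite /K min_l.
move=> i a b _ [H1 H2]; split; last exact: addr_ge0.
apply: (le_trans (@min_sub D (f i) a D0 (f0 i) H2)); by rewrite lerD2l.
Qed.

Lemma summin (W : finType) (P : W -> R) (D : R) : in_PDelta D P -> 0 < D <= 1/2 ->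
  2 * D <= \sum_w Num.min (P w) D.
Proof.
move=> [[P0 P1] PD] /andP[D0 D2].
have [[w0 hw0]|] := pselect (exists w, D <= P w).
- rewrite (bigD1 w0) //= (min_r hw0).
  have : Num.min (\sum_(w | w != w0) P w) D <= \sum_(w | w != w0) Num.min (P w) D.
    exact: min_sum (ltW D0) P0.
  have -> : \sum_(w | w != w0) P w = 1 - P w0.
    by rewrite -P1 [in RHS](bigD1 w0) //= addrC addrK.
  have := PD w0.
  move=> H1; case: (leP (1 - P w0) D) => h H2; lra.
- move=> nw.
  have -> : \sum_w Num.min (P w) D = \sum_w P w.
    apply: eq_bigr => w _; rewrite min_l //; apply: ltW; rewrite ltNge; apply/negP => h.
    by apply: nw; exists w.
  rewrite P1; lra.
Qed.
Lemma f1_int (W : finType) (P : W -> R) (D : R) : in_PDelta D P -> 0 < D < 1/2 ->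
  ((10/9 * D)%:E <= \int[mu]_(y in `[(1 - D)%R, 1%R]) (f1 P y)%:E)%E.
Proof.
move=> hP /andP[D0 D2].
have [[P0 P1] PD] := hP.
have hD : 0 < D < 1 by rewrite D0 /=; lra.
have hu : 0 < 1 - D < 1 by apply/andP; split; lra.
have E : forall y, (f1 P y)%:E = (\sum_(w : W) (if (0 < P w)%R then (y `^ ((P w)^-1 - 1))%:E else 0))%E.
  move=> y; rewrite /f1 -sumEFin big_mkcond /=; apply: eq_bigr => w _.
  by case: ifP.
under eq_integral do rewrite E.
pose g := fun (w : W) (y : R) => if (0 < P w)%R then (y `^ ((P w)^-1 - 1))%:E else 0%E.
have mg : forall w, measurable_fun `[(1 - D)%R, 1%R] (g w).
  move=> w; rewrite /g; case: (0 < P w)%R; last exact: measurable_cst.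
  by apply: measurableT_comp => //; apply: measurable_funTS; exact: measurable_powR.
have g0 : forall w y, `[(1 - D)%R, 1%R] y -> (0 <= g w y)%E.
  by move=> w y _; rewrite /g; case: ifP => // _; rewrite lee_fin powR_ge0.
rewrite (ge0_integral_sum mu (measurable_itv _) mg g0) /g.
apply: (@le_trans _ _ (\sum_(w : W) (5/9 * Num.min (P w) D)%:E)%E); last first.
  apply: lee_sum => w _; have [Pw|Pw] := boolP (0 < P w)%R.
    rewrite int_powR //; last by rewrite invr_gt0.
    by rewrite lee_fin invrK; have := @spike D (P w) hD Pw; lra.
  rewrite integral0 lee_fin.
  have -> : P w = 0 by apply/eqP; rewrite eq_le P0 andbT leNgt.
  rewrite min_l ?mulr0 //; exact: ltW.
rewrite sumEFin lee_fin -mulr_sumr.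
have := @summin W P D hP; rewrite D0 /= => /(_ (ltW D2)) H.
lra.
Qed.


Lemma measurable_inv : measurable_fun [set: R] (fun x : R => x^-1).
Proof.
have -> : [set: R] = [set x | x != 0] `|` [set 0].
  apply/seteqP; split => x // _; case: (eqVneq x 0) => [->|h]; [by right|by left].
apply/measurable_funU.
- by apply: open_measurable; exact: open_neq.
- exact: measurable_set1.
split; last exact: measurable_fun_set1.
apply: open_continuous_measurable_fun; first exact: open_neq.
move=> x; rewrite inE /= => x0; exact: inv_continuous.
Qed.
End Aux.

Theorem lemmaA5 :
  exists c : rat, 0 < c /\
  forall (R : realType) (W : finType) (d : measure_display) (T : measurableType d)
         (mu : probability T R)
         (P : T -> W -> R) (Delta : R),
    (forall w : W, measurable_fun setT (fun t => P t w)) ->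
    {ae mu, forall t, in_PDelta Delta (P t)} ->
    Delta < 1 / 2 ->
    ((ratr c * Delta)%:E <=
     \int[(@lebesgue_measure R)]_(y in `[0%R, 1%R])
        ((fbar mu P y - 1) ^+ 2)%:E)%E.
Proof.
exists (81%:R)^-1; split; first by rewrite invr_gt0.
move=> R W d T mu P Delta mP hae hD.
have -> : ratr (81%:R)^-1 = (81%:R : R)^-1.
  by rewrite fmorphV rmorph_nat.
have [D0|D0] := leP Delta 0.
  apply: (@le_trans _ _ 0%E).
    by rewrite lee_fin; apply: mulr_ge0_le0 => //; rewrite invr_ge0 ler0n.
  by apply: integral_ge0 => y _; rewrite lee_fin sqr_ge0.
set u := 1 - Delta.
have u0 : 0 < u by rewrite /u; lra.
have u1 : u < 1 by rewrite /u; lra.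
pose h := fun z : T * R => \sum_(w : W)
  (\1_(`]0%R, +oo[ : set R) (P z.1 w) * expR (((P z.1 w)^-1 - 1) * ln z.2)).
have h0 : forall z, 0 <= h z.
  move=> z; apply: sumr_ge0 => w _; apply: mulr_ge0 => //; exact: expR_ge0.
have mPf : forall w, measurable_fun setT (fun z : T * R => P z.1 w).
  by move=> w; exact: (measurableT_comp (mP w) measurable_fst).
have mh : measurable_fun setT h.
  apply: measurable_sum => w; apply: measurable_funM.
  - apply: measurableT_comp (mPf w).
    exact: measurable_indic (measurable_itv _).
  - apply: measurableT_comp; first exact: measurable_expR.
    apply: measurable_funM.
    + apply: measurable_funB; last exact: measurable_cst.
      apply: measurableT_comp; [exact: measurable_inv | exact: (mPf w)].
    + apply: measurableT_comp; [exact: measurable_ln | exact: measurable_snd].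
have hf1 : forall t y, 0 < y -> h (t, y) = f1 (P t) y.
  move=> t y y0; rewrite /h /f1 [RHS]big_mkcond /=; apply: eq_bigr => w _.
  case: (boolP (0 < P t w)) => hp.
  - rewrite indicE mem_set ?mul1r; last by rewrite /= in_itv /= andbT.
    by rewrite /powR gt_eqF.
  - rewrite indicE memNset ?mul0r //; rewrite /= in_itv /= andbT; exact/negP.

pose hE := fun z : T * R => (h z)%:E.
have mhE : measurable_fun setT hE by apply: measurableT_comp => //.
have hE0 : forall z, (0 <= hE z)%E by move=> z; rewrite lee_fin.
pose Gh := fun y : R => (\int[mu]_t hE (t, y))%E.
have mGh : measurable_fun setT Gh.
  exact: (measurable_fun_fubini_tonelli_G hE mhE hE0).
have Gh0 : forall y, (0 <= Gh y)%E by move=> y; apply: integral_ge0 => t _.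
have Ghle : forall y, 0 < y <= 1 -> (Gh y <= (#|W|%:R)%:E)%E.
  move=> y /andP[y0 y1].
  apply: (@le_trans _ _ (\int[mu]_(t in setT) (cst (#|W|%:R : R)%:E) t)%E); last first.
    rewrite integral_cst // [X in (_ * X)%E](_ : _ = 1%E) ?mule1 //; exact: probability_setT.
  apply: (ae_ge0_le_integral measurableT).
  - by move=> t _; exact: hE0.
  - exact: (measurableT_comp mhE (pair2_measurable y)).
  - by move=> t _; rewrite lee_fin ler0n.
  - exact: measurable_cst.
  - apply: filterS hae => t [[Pt0 Pt1] PtD] _.
    rewrite /hE /h lee_fin /=.
    have -> : (#|W|%:R : R) = \sum_(w : W) 1.
      by rewrite sumr_const.
    apply: ler_sum => w _.
    case: (boolP (0 < P t w)) => hp.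
    + rewrite indicE mem_set ?mul1r; last by rewrite /= in_itv /= andbT.
      have e0 : 0 <= (P t w)^-1 - 1.
        rewrite subr_ge0 -(ler_pM2l hp) mulfV ?gt_eqF // mulr1.
        by have := PtD w; lra.
      rewrite -[X in _ <= X]expR0 ler_expR; apply: mulr_ge0_le0 => //; exact: ln_le0 y1.
    + by rewrite indicE memNset ?mul0r //; rewrite /= in_itv /= andbT; exact/negP.
have Ghfin : forall y, 0 < y <= 1 -> Gh y = (fine (Gh y))%:E.
  move=> y hy; rewrite fineK // ge0_fin_numE //.
  exact: le_lt_trans (Ghle y hy) (ltey _).
have fbarE : forall y, 0 < y <= 1 -> fbar mu P y = fine (Gh y).
  move=> y /andP[y0 y1]; rewrite /fbar; congr fine.
  by apply: eq_integral => t _; rewrite /hE hf1.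

have uA : forall y, y \in (`[u, 1%R] : set R) -> 0 < y <= 1.
  move=> y /set_mem /=; rewrite in_itv /= => /andP[uy y1]; rewrite y1 andbT.
  exact: lt_le_trans uy.
have key : ((10/9 * Delta)%:E <= \int[lebesgue_measure]_(y in `[u, 1%R]) Gh y)%E.
  pose k := fun z : T * R => (h z * \1_(`[u, 1%R] : set R) z.2)%:E.
  have mk : measurable_fun setT k.
    apply: measurableT_comp => //; apply: measurable_funM => //.
    apply: measurableT_comp; last exact: measurable_snd.
    exact: measurable_indic (measurable_itv _).
  have k0 : forall z, (0 <= k z)%E.
    by move=> z; rewrite lee_fin; apply: mulr_ge0.
  have E1 : (\int[lebesgue_measure]_(y in `[u, 1%R]) Gh y =
            \int[lebesgue_measure]_y \int[mu]_t k (t, y))%E.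
    rewrite integral_mkcond; apply: eq_integral => y _; rewrite patchE.
    case: ifP => yA.
    - by apply: eq_integral => t _; rewrite /k /hE indicE yA mulr1.
    - rewrite /k; under eq_integral do rewrite indicE yA mulr0.
      by rewrite integral0.
  rewrite E1 -(@fubini_tonelli _ _ _ _ _ mu lebesgue_measure k mk k0).
  apply: (@le_trans _ _ (\int[mu]_(t in setT) (cst (10/9 * Delta)%:E) t)%E).
    rewrite integral_cst // [X in (_ * X)%E](_ : _ = 1%E) ?mule1 //.
    exact: probability_setT.
  apply: (ae_ge0_le_integral measurableT).
  - by move=> t _; rewrite lee_fin; apply: mulr_ge0 => //; exact: ltW.
  - exact: measurable_cst.
  - by move=> t _; apply: integral_ge0 => y _; exact: k0.
  - exact: (@measurable_fun_fubini_tonelli_F _ _ _ _ _ lebesgue_measure k mk k0).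
  - apply: filterS hae => t hPt _.
    have -> : (\int[lebesgue_measure]_y k (t, y) =
               \int[lebesgue_measure]_(y in `[u, 1%R]) (f1 (P t) y)%:E)%E.
      rewrite [RHS]integral_mkcond; apply: eq_integral => y _; rewrite patchE /k indicE.
      case: ifP => yA.
      + by rewrite mulr1 hf1 //; case/andP: (uA y yA).
      + by rewrite mulr0.
    apply: f1_int => //; rewrite D0 /=; exact: hD.

pose G' := fun y => ((fine (Gh y) - 1) ^+ 2)%:E.
have mfG : measurable_fun setT (fun y => fine (Gh y)).
  exact: (measurableT_comp (fine_measurable measurableT) mGh).
have mG' : measurable_fun setT G'.
  apply: measurableT_comp => //; apply: measurable_funX.
  by apply: measurable_funB => //; exact: measurable_cst.
set F := (fun y => ((fbar mu P y - 1) ^+ 2)%:E).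
have mF : measurable_fun (`[0%R, 1%R] : set R) F.
  have -> : (`[0%R, 1%R] : set R) = [set 0%R] `|` `]0%R, 1%R].
    apply/seteqP; split => x /=.
    - rewrite in_itv /= => /andP[x0 x1]; case: (eqVneq x 0) => [->|hx]; [by left|right].
      by rewrite /= in_itv /= x1 andbT lt_neqAle eq_sym hx x0.
    - case => [->|]; first by rewrite in_itv /= lexx ler01.
      by rewrite /= !in_itv /= => /andP[/ltW -> ->].
  apply/measurable_funU => //; split; first exact: measurable_fun_set1.
  apply: (eq_measurable_fun G'); last exact: measurable_funTS.
  move=> y /set_mem /=; rewrite in_itv /= => hy.
  by rewrite /F /G' fbarE.
apply: (@le_trans _ _ (\int[lebesgue_measure]_(y in `[u, 1%R]) F y)%E); last first.
  apply: ge0_subset_integral => //.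
  - by move=> y _; rewrite lee_fin sqr_ge0.
  - move=> y /=; rewrite !in_itv /= => /andP[uy ->]; rewrite andbT.
    exact: le_trans (ltW u0) uy.
have -> : (\int[lebesgue_measure]_(y in `[u, 1%R]) F y =
           \int[lebesgue_measure]_(y in `[u, 1%R]) G' y)%E.
  by apply: eq_integral => y yA; rewrite /F /G' fbarE //; exact: uA.
set X := (\int[lebesgue_measure]_(y in `[u, 1%R]) G' y)%E.
have X0 : (0 <= X)%E by apply: integral_ge0 => y _; rewrite lee_fin sqr_ge0.
have mA : measurable (`[u, 1%R] : set R) by exact: measurable_itv.
have I1 : (\int[lebesgue_measure]_(y in `[u, 1%R]) ((2/9 * fine (Gh y))%:E) =
          (2/9)%:E * \int[lebesgue_measure]_(y in `[u, 1%R]) Gh y)%E.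
  have Gh0' : forall y, (`[u, 1%R] : set R) y -> (0 <= Gh y)%E by move=> y _; exact: Gh0.
  have mGhA : measurable_fun (`[u, 1%R] : set R) Gh by exact: measurable_funTS.
  have k0 : (0 : R) <= 2/9 by [].
  rewrite -(@ge0_integralZl_EFin _ _ _ lebesgue_measure _ mA _ Gh0' mGhA _ k0).
  by apply: eq_integral => y yA; rewrite EFinM -Ghfin //; exact: uA.
have I2 : (\int[lebesgue_measure]_(y in `[u, 1%R]) ((2/9 * fine (Gh y))%:E) <=
          \int[lebesgue_measure]_(y in `[u, 1%R]) (G' y + (19/81)%:E))%E.
  apply: ge0_le_integral => //.
  - by move=> y _; rewrite lee_fin; apply: mulr_ge0 => //; exact: fine_ge0.
  - apply: measurableT_comp => //; apply: measurable_funTS.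
    by apply: measurable_funM => //; exact: measurable_cst.
  - apply: emeasurable_funD; first exact: measurable_funTS.
    exact: measurable_cst.
  - move=> y _; rewrite /G' -EFinD lee_fin.
    set g := fine (Gh y); have := sqr_ge0 (g - 10/9); rewrite !expr2; lra.
have I3 : (\int[lebesgue_measure]_(y in `[u, 1%R]) (G' y + (19/81)%:E) =
          X + (19/81 * Delta)%:E)%E.
  rewrite ge0_integralD //.
  - congr (_ + _)%E.
    have LA : (lebesgue_measure (`[u, 1%R] : set R) = (1 - u)%:E)%E.
      by rewrite lebesgue_measure_itv /= lte_fin u1 -EFinD.
    rewrite integral_cst // [X in (_ * X)%E](_ : _ = (1 - u)%:E); last exact: LA.
    by rewrite -EFinM /u; congr (_%:E); ring.
  - by move=> y _; rewrite lee_fin sqr_ge0.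
  - exact: measurable_funTS.
  all: try by move=> y _; rewrite lee_fin.
  all: try exact: measurable_cst.
have H : ((20/81 * Delta)%:E <= X + (19/81 * Delta)%:E)%E.
  rewrite -I3; apply: le_trans I2; rewrite I1.
  have -> : 20/81 * Delta = 2/9 * (10/9 * Delta) by field.
  by rewrite EFinM; apply: lee_wpmul2l => //; rewrite lee_fin.
move: H X0; clear I3; clearbody X; case: X => [r| |] //=.
- by rewrite -EFinD !lee_fin => ? ?; lra.
- by move=> _ _; exact: leey.
Qed.
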